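(* Let $G_{\|v_0}$ be an initialized mean-payoff game, let $i\in\Pi$, and let $\lambda$ be a requirement with either $\lambda(V)\subseteq\mathbb{R}$ or $\lambda=\lambda_0$. Then $$\inf_{\tau_\mathbb{P}}\ \sup_{\tau_\mathbb{C}}\ \nu_\mathbb{C}\big(\langle\tau_\mathbb{P},\tau_\mathbb{C}\rangle_{s_0}\big)=\inf_{\bar\sigma_{-i}\in\lambda\mathrm{Rat}_i(v_0)}\ \sup_{\sigma_i}\ \mu_i\big(\langle\bar\sigma_{-i},\sigma_i\rangle_{v_0}\big),$$ where the left-hand side is the value $\mathrm{val}_\mathbb{C}(\mathrm{Conc}_{\lambda i}(G)_{\|s_0})$ of the concrete negotiation game.
   Context: A game is a tuple $G=(\Pi,V,(V_i)_{i\in\Pi},E,\mu)$ with $\Pi$ a finite set of players, $(V,E)$ a finite directed graph in which every vertex has an outgoing edge, $(V_i)_i$ a partition of $V$, and $\mu:V^\omega\to\mathbb{R}^\Pi$. Plays, histories, strategies, profiles, compatibility, $\langle\bar\sigma\rangle_v$ and $\bar\sigma_{\|hw}$ ($\sigma_{j\|hw}(h')=\sigma_j(hh')$) are as usual; $-i=\Pi\setminus\{i\}$. A mean-payoff game is a game where $\mu$ is given by a weight function $\pi:E\to\mathbb{Q}^\Pi$ via $\mu_j(\rho)=\liminf_{n\to\infty}\frac1n\sum_{k=0}^{n-1}\pi_j(\rho_k\rho_{k+1})$. A requirement is a map $\lambda:V\to\mathbb{R}\cup\{\pm\infty\}$; $\lambda_0$ is constantly $-\infty$. A play $\rho$ is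 $\lambda$-consistent if for every $j\in\Pi$ and $n$ with $\rho_n\in V_j$, $\mu_j(\rho_n\rho_{n+1}\cdots)\ge\lambda(\rho_n)$. $\lambda\mathrm{Rat}_i(v)$ is the set of profiles $\bar\sigma_{-i}$ in $G_{\|v}$ for which there exists $\sigma_i$ such that for every history $hw$ from $v$ compatible with $\bar\sigma_{-i}$, $\langle\bar\sigma_{\|hw}\rangle_w$ is $\lambda$-consistent; $\inf\emptyset=+\infty$. The concrete negotiation game $\mathrm{Conc}_{\lambda i}(G)_{\|s_0}$ is the two-player zero-sum game between Prover $\mathbb{P}$ and Challenger $\mathbb{C}$ with Prover states $S_\mathbb{P}=V\times2^V$, Challenger states $S_\mathbb{C}=E\times2^V$, initial state $s_0=(v_0,\{v_0\})$, and transitions: proposals $(v,M)\to(vw,M)$ for $vw\in E$; acceptations $(vw,M)\to(w,M\cup\{w\})$; deviations $(uv,M)\to(w,\{w\})$ whenever $u\in V_i$, $uw\in E$, $w\neq v$. The weight function $\hat\pi$ has coordinates indexed by $\Pi\cup\{\star\}$: on proposals all coordinates are $0$; on an acceptation or deviation $(uv,M)\to(w,N)$, $\hat\pi_\star=2\pi_i(uw)$ and, for $j\in\Pi$, $\hat\pi_j=2\big(\pi_j(uw)-\max_{x\in M\cap V_j}\lambda(x)\big)$, with the convention that $\hat\pi_j=0$ when $M\cap V_j=\emptyset$ or this maximum is $-\infty$. For each coordinate $d$, $\hat\mu_d(\eta)=\liminf_n\frac1n\sum_{k<n}\hat\pi_d(\eta_k\eta_{k+1})$. Challenger's outcome is $\nu_\mathbb{C}(\eta)=+\infty$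 if $\eta$ contains only finitely many deviations and $\hat\mu_j(\eta)<0$ for some $j\in\Pi$, and $\nu_\mathbb{C}(\eta)=\hat\mu_\star(\eta)$ otherwise; $\nu_\mathbb{P}=-\nu_\mathbb{C}$. $\langle\tau_\mathbb{P},\tau_\mathbb{C}\rangle_{s_0}$ is the play generated by strategies of Prover and Challenger. The game is determined, so $\mathrm{val}_\mathbb{C}=\inf_{\tau_\mathbb{P}}\sup_{\tau_\mathbb{C}}\nu_\mathbb{C}=\sup_{\tau_\mathbb{C}}\inf_{\tau_\mathbb{P}}\nu_\mathbb{C}$. *)

(* Defs.v *)
From HB Require Import structures.
From mathcomp Require Import all_boot all_order all_algebra.
From mathcomp Require Import all_classical all_reals.
From mathcomp Require Import ereal sequences.
Set Implicit Arguments. Unset Strict Implicit. Unset Printing Implicit Defensive.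
Import Order.TTheory GRing.Theory Num.Theory.
Local Open Scope ring_scope.
Local Open Scope ereal_scope.

Definition mean_payoff (R : realType) (w : nat -> R) : \bar R :=
  limn_einf (fun n : nat => (((n%:R)^-1 * \sum_(k < n) w k)%R)%:E).

(* Play generated from an initial state by a "next move" function
   [nxt past current]; [gen_tail nxt x0 n] is the list x_1 .. x_n. *)
Fixpoint gen_tail (T : Type) (nxt : seq T -> T -> T) (x0 : T) (n : nat) : seq T :=
  match n with
  | 0 => [::]
  | n'.+1 => let t := gen_tail nxt x0 n' in
             rcons t (nxt (belast x0 t) (last x0 t))
  end.
Definition gen_play (T : Type) (nxt : seq T -> T -> T) (x0 : T) : nat -> T :=
  fun n => last x0 (gen_tail nxt x0 n).

Section Game.
Variables (R : realType) (V Pi : finType) (owner : V -> Pi) (E : rel V)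
          (pi : V -> V -> Pi -> rat).

(* A strategy maps a history, given as (past vertices, current vertex),
   to the next vertex. *)
Definition strat := seq V -> V -> V.
Definition profile := Pi -> strat.

Definition valid_strat (j : Pi) (s : strat) : Prop :=
  forall p v, owner v = j -> E v (s p v).

(* profile of the players other than i (the i-th component is ignored) *)
Definition valid_profile_mi (i : Pi) (sg : profile) : Prop :=
  forall j, j != i -> valid_strat j (sg j).

Definition combine (i : Pi) (sg : profile) (si : strat) : profile :=
  fun j => if j == i then si else sg j.

Definition outcome (sg : profile) (v : V) : nat -> V :=
  gen_play (fun p x => sg (owner x) p x) v.

(* sg_{|hw}: history hw = rcons h w, sigma_{|hw}(h') = sigma(h h') *)
Definition shift_profile (sg : profile) (h : seq V) : profile :=
  fun j p x => sg j (h ++ p) x.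

Definition mu (j : Pi) (rho : nat -> V) : \bar R :=
  mean_payoff (fun k => ratr (pi (rho k) (rho k.+1) j)).

Definition suffix (rho : nat -> V) (n : nat) : nat -> V := fun k => rho (n + k)%N.

Definition lam_consistent (lam : V -> \bar R) (rho : nat -> V) : Prop :=
  forall (j : Pi) (n : nat), owner (rho n) = j -> lam (rho n) <= mu j (suffix rho n).

(* history (rcons h w) of G starting at v *)
Definition history_from (v : V) (h : seq V) (w : V) : Prop :=
  head w h = v /\
  forall k, (k < size h)%N ->
    E (nth w (rcons h w) k) (nth w (rcons h w) k.+1).

Definition compatible_mi (i : Pi) (sg : profile) (h : seq V) (w : V) : Prop :=
  forall k, (k < size h)%N ->
    let x := nth w (rcons h w) k in
    owner x != i ->
    nth w (rcons h w) k.+1 = sg (owner x) (take k (rcons h w)) x.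

Definition lamRat (lam : V -> \bar R) (i : Pi) (v : V) (sg : profile) : Prop :=
  exists si : strat, valid_strat i si /\
    forall h w, history_from v h w -> compatible_mi i sg h w ->
      lam_consistent lam (outcome (shift_profile (combine i sg si) h) w).

Inductive cstate :=
| PS of V & {set V}
| CS of V & V & {set V}.     (* Challenger state (uv, M) *)

Definition ctrans (i : Pi) (s s' : cstate) : Prop :=
  match s, s' with
  | PS v M, CS u w N => u = v /\ N = M /\ E v w
  | CS u v M, PS w N =>
      (w = v /\ N = M :|: [set v])
      \/ (owner u = i /\ E u w /\ w != v /\ N = [set w])
  | _, _ => False
  end.

Definition is_deviation (s s' : cstate) : Prop :=
  match s, s' with
  | CS u v M, PS w N => w != v
  | _, _ => False
  end.

Definition cstrat := seq cstate -> cstate -> cstate.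

Definition valid_prover (i : Pi) (t : cstrat) : Prop :=
  forall p v M, ctrans i (PS v M) (t p (PS v M)).
Definition valid_challenger (i : Pi) (t : cstrat) : Prop :=
  forall p u v M, ctrans i (CS u v M) (t p (CS u v M)).

Definition cplay (tP tC : cstrat) (s : cstate) : nat -> cstate :=
  gen_play (fun p x => match x with PS _ _ => tP p x | CS _ _ _ => tC p x end) s.

(* weight hat-pi; coordinate None is the extra coordinate star.
   Convention: the max over an empty set is -oo, and the weight is 0 whenever
   that max is not a real number. *)
Definition hatpi (lam : V -> \bar R) (i : Pi) (d : option Pi) (s s' : cstate) : R :=
  match s, s' with
  | CS u v M, PS w N =>
      match d with
      | None => 2 * ratr (pi u w i)
      | Some j =>
          let m := \big[Order.max/-oo]_(x in M | owner x == j) lam x in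
          if m \is a fin_num then 2 * (ratr (pi u w j) - fine m) else 0
      end
  | _, _ => 0
  end%R.

Definition hatmu (lam : V -> \bar R) (i : Pi) (d : option Pi) (eta : nat -> cstate) : \bar R :=
  mean_payoff (fun k => hatpi lam i d (eta k) (eta k.+1)).

Definition nuC (lam : V -> \bar R) (i : Pi) (eta : nat -> cstate) : \bar R :=
  if `[< (exists N, forall k, (N <= k)%N -> ~ is_deviation (eta k) (eta k.+1))
         /\ exists j : Pi, hatmu lam i (Some j) eta < 0 >]
  then +oo
  else hatmu lam i None eta.

End Game.

(* Main.v *)
Require Import Defs.
From HB Require Import structures.
From mathcomp Require Import all_boot all_order all_algebra.
From mathcomp Require Import all_classical all_reals.
From mathcomp Require Import ereal sequences.
From mathcomp Require Import ring lra.
Import Order.TTheory GRing.Theory Num.Theory.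
Local Open Scope ring_scope.
Local Open Scope classical_set_scope.
Local Open Scope ereal_scope.

Section MP.
Variable R : realType.
Implicit Types u v a b : nat -> R.

Lemma limn_einf_sup (U : nat -> \bar R) :
  limn_einf U = ereal_sup (range (einfs U)).
Proof. by rewrite limn_einf_lim; apply/cvg_lim => //; apply: cvg_einfs_sup. Qed.

Lemma LIM_LE u v :
 (forall e : R, (0 < e)%R -> forall M, exists N, forall n, (N <= n)%N ->
     exists m, (M <= m)%N /\ (u m <= v n + e)%R) ->
 limn_einf (fun n => (u n)%:E) <= limn_einf (fun n => (v n)%:E).
Proof.
move=> H; rewrite [X in X <= _]limn_einf_sup.
apply: ge_ereal_sup => _ [M _ <-].
apply/lee_addgt0Pr => e e0.
have [N HN] := H e e0 M.
have h1 : einfs (fun n => (u n)%:E) M - e%:E <= einfs (fun n => (v n)%:E) N.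
  apply: le_ereal_inf_tmp => _ [n /= Nn <-].
  have [m [Mm hm]] := HN n Nn.
  rewrite EFinN leeBlDr // /einfs /=.
  apply: (@le_trans _ _ (u m)%:E).
    by apply: ereal_inf_lbound; exists m.
  by rewrite -EFinD lee_fin.
have h2 : einfs (fun n => (v n)%:E) N <= limn_einf (fun n => (v n)%:E).
  by rewrite limn_einf_sup; apply: ereal_sup_ubound; exists N.
by rewrite -leeBlDr //; apply: le_trans h2.
Qed.


Definition avg a n : R := ((n%:R)^-1 * \sum_(k < n) a k)%R.

Lemma mpE a : mean_payoff a = limn_einf (fun n => (avg a n)%:E).
Proof. by []. Qed.

Lemma small_div (D e : R) : (0 < e)%R -> exists N, forall n, (N <= n)%N ->
  (D / n%:R <= e)%R.
Proof.
move=> e0; exists (Num.trunc (`|D| / e)).+1 => n Nn.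
have n0 : (0 < n%:R :> R)%R by rewrite ltr0n (leq_trans _ Nn).
rewrite ler_pdivrMr //.
apply: (le_trans (ler_norm D)).
have := truncnS_gt (`|D| / e); rewrite ltr_pdivrMr // => h.
apply: ltW; apply: (lt_le_trans h).
by rewrite mulrC ler_wpM2l ?(ltW e0) // ler_nat.
Qed.

Lemma mp_le_S a b (D : R) :
  (forall n, (\sum_(k < n) a k <= \sum_(k < n) b k + D)%R) ->
  mean_payoff a <= mean_payoff b.
Proof.
move=> H; rewrite !mpE; apply: LIM_LE => e e0 M.
have [N HN] := (@small_div D e e0).
exists (maxn N (maxn M 1)) => n; rewrite !geq_max => /and3P[Nn Mn n1].
exists n; split => //.
apply: (@le_trans _ _ (avg b n + D / n%:R)%R); last by rewrite lerD2l HN.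
have n0 : (0 < n%:R :> R)%R by rewrite ltr0n.
rewrite /avg ler_pdivrMl // mulrDr mulrA mulfV ?gt_eqF // mul1r.
by rewrite mulrC -mulrA mulVf ?gt_eqF // mulr1 H.
Qed.

Lemma mp_eq_S a b (D : R) :
  (forall n, (`|\sum_(k < n) a k - \sum_(k < n) b k| <= D)%R) ->
  mean_payoff a = mean_payoff b.
Proof.
move=> H; apply/eqP; rewrite eq_le; apply/andP; split.
  apply: (@mp_le_S _ _ D) => n; rewrite -lerBlDl.
  by apply: le_trans (ler_norm _) (H n).
apply: (@mp_le_S _ _ D) => n; rewrite -lerBlDl.
by apply: le_trans (ler_norm _) _; rewrite distrC H.
Qed.


Lemma sum_nat_bnd a (B : R) m p : (forall k, `|a k| <= B)%R ->
  (`|\sum_(m <= k < p) a k| <= (p - m)%:R * B)%R.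
Proof.
move=> hB; apply: (le_trans (ler_norm_sum _ _ _)).
apply: (le_trans (y := \sum_(m <= k < p) B)%R); first by apply: ler_sum => k _.
by rewrite sumr_const_nat mulr_natl.
Qed.

Lemma LIM_EV u v N : (forall n, (N <= n)%N -> u n = v n) ->
  limn_einf (fun n => (u n)%:E) = limn_einf (fun n => (v n)%:E).
Proof.
move=> H; apply/eqP; rewrite eq_le; apply/andP; split; apply: LIM_LE => e e0 M;
  exists (maxn N M) => n; rewrite geq_max => /andP[Nn Mn]; exists n; split => //;
  rewrite H // lerDl ltW //.
Qed.

Lemma mp_le_ev a b K : (forall k, (K <= k)%N -> (a k <= b k)%R) ->
  mean_payoff a <= mean_payoff b.
Proof.
move=> H; apply: (@mp_le_S _ _ (\sum_(0 <= k < K) `|a k - b k|)%R) => n.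
rewrite -lerBlDl -sumrB big_mkord.
suff : (\sum_(0 <= k < n) (a k - b k) <= \sum_(0 <= k < minn n K) `|a k - b k|)%R.
  move=> h; rewrite -(big_mkord xpredT (fun k => a k - b k)%R).
  apply: (le_trans h).
  rewrite -(big_mkord xpredT (fun k => `|a k - b k|)%R).
  rewrite [X in (_ <= X)%R](big_cat_nat (n:=minn n K)) //=; last by rewrite geq_minr.
  by rewrite lerDl sumr_ge0.
elim: n => [|n IH]; first by rewrite min0n !big_geq. 
rewrite big_nat_recr //=.
case: (ltnP n K) => nK.
  rewrite (minn_idPl nK) (minn_idPl (ltnW nK)) in IH *; rewrite big_nat_recr //=.
  by apply: lerD => //; apply: ler_norm.
rewrite (minn_idPr nK) (minn_idPr (leqW nK)) in IH *.
by rewrite -[X in (_ <= X)%R]addr0 lerD // subr_le0 H.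
Qed.

Lemma mp_eq_ev a b K : (forall k, (K <= k)%N -> a k = b k) ->
  mean_payoff a = mean_payoff b.
Proof.
move=> H; apply/eqP; rewrite eq_le; apply/andP; split; apply: (@mp_le_ev _ _ K) => k Kk;
  by rewrite H.
Qed.

Lemma mp_const (c : R) : mean_payoff (fun _ => c) = c%:E.
Proof.
rewrite mpE (@LIM_EV _ (fun _ => c) 1).
  by have [-> _] := cvg_limn_einf_sup (cvg_cst (c%:E)).
move=> n n1; rewrite /avg sumr_const card_ord -[(c *+ n)%R]mulr_natl mulrA mulVf ?mul1r //.
by rewrite pnatr_eq0 -lt0n.
Qed.

Lemma mp_subc a (c : R) : mean_payoff (fun k => a k - c)%R = mean_payoff a - c%:E.
Proof.
rewrite !mpE (@LIM_EV _ (fun n => (- c) + avg a n)%R 1).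
  rewrite (_ : (fun n => ((- c) + avg a n)%R%:E) = (fun n => (- c)%:E + (avg a n)%:E)); last first.
    by apply/funext => n; rewrite EFinD.
  by rewrite (limn_einf_shift (fun n => (avg a n)%:E)) // addeC EFinN.
move=> n n1; rewrite /avg sumrB sumr_const card_ord mulrBr -[(c *+ n)%R]mulr_natl mulrA mulVf ?mul1r.
  by rewrite addrC.
by rewrite pnatr_eq0 -lt0n.
Qed.

Lemma mp_bnd a (B : R) : (forall k, `|a k| <= B)%R -> mean_payoff a \is a fin_num.
Proof.
move=> hB; rewrite fin_numElt; apply/andP; split.
  apply: (@lt_le_trans _ _ (-B)%:E); first by rewrite ltNyr.
  rewrite -mp_const; apply: (@mp_le_ev _ _ 0) => k _.
  by rewrite lerNl (le_trans _ (hB k)) // -normrN ler_norm.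
apply: (@le_lt_trans _ _ B%:E); last by rewrite ltry.
rewrite -mp_const; apply: (@mp_le_ev _ _ 0) => k _.
by rewrite (le_trans _ (hB k)) // ler_norm.
Qed.

Lemma mp_shift a (B : R) N : (forall k, `|a k| <= B)%R ->
  mean_payoff (fun k => a (N + k)%N) = mean_payoff a.
Proof.
move=> hB; apply: (@mp_eq_S _ _ ((N%:R * B) + (N%:R * B))%R) => n.
have e1 : (\sum_(k < n) a (N + k)%N = \sum_(N <= k < N + n) a k)%R.
  elim: n => [|n IH]; first by rewrite big_ord0 addn0 big_geq.
  by rewrite big_ord_recr /= IH addnS big_nat_recr //= leq_addr.
have e2 : (\sum_(N <= k < N + n) a k + \sum_(0 <= k < N) a k =
           \sum_(k < n) a k + \sum_(n <= k < N + n) a k)%R.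
  rewrite addrC -big_cat_nat ?leq_addr // -(big_mkord xpredT a).
  by rewrite -big_cat_nat ?leq_addl.
have -> : (\sum_(k < n) a (N + k)%N - \sum_(k < n) a k =
     \sum_(n <= k < N + n) a k - \sum_(0 <= k < N) a k)%R.
  rewrite e1; rewrite -(addrK (\sum_(0 <= k < N) a k)%R (\sum_(N <= k < N + n) a k)%R) e2; ring.
apply: (le_trans (ler_normB _ _)); apply: lerD.
  by apply: (le_trans (sum_nat_bnd _ _ _ _ hB)); rewrite addnK.
by apply: (le_trans (sum_nat_bnd _ _ _ _ hB)); rewrite subn0.
Qed.


Lemma sum_ord_bnd a (B : R) n : (forall k, `|a k| <= B)%R ->
  (`|\sum_(k < n) a k| <= n%:R * B)%R.
Proof.
move=> hB; rewrite -(big_mkord xpredT a).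
by apply: (le_trans (sum_nat_bnd _ _ _ _ hB)); rewrite subn0.
Qed.

Lemma div_le (x y S W : R) : (0 < x)%R -> (0 < y)%R -> (y * S <= x * W)%R ->
  (x^-1 * S <= y^-1 * W)%R.
Proof.
move=> x0 y0 h.
have xn : x != 0%R by rewrite gt_eqF.
have yn : y != 0%R by rewrite gt_eqF.
have -> : (x^-1 * S = (x*y)^-1 * (y*S))%R.
  by rewrite invfM -mulrA (mulrA y^-1%R) mulVf // mul1r.
have -> : (y^-1 * W = (x*y)^-1 * (x*W))%R.
  by rewrite invfM (mulrC x^-1%R) -mulrA (mulrA x^-1%R) mulVf // mul1r.
by rewrite ler_wpM2l // invr_ge0 mulr_ge0 // ltW.
Qed.

Lemma sum_interleave a b : (forall k, b k = if odd k then 2 * a k./2 else 0)%R ->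
  forall n, (\sum_(k < n) b k = 2 * \sum_(k < n./2) a k)%R.
Proof.
move=> hb; elim => [|n IH]; first by rewrite !big_ord0 mulr0.
rewrite big_ord_recr /= IH hb uphalf_half.
case: (odd n) => /=; last by rewrite addr0.
by rewrite big_ord_recr /= mulrDr.
Qed.

Lemma mp_interleave a b (B : R) : (forall k, `|a k| <= B)%R ->
  (forall k, b k = if odd k then 2 * a k./2 else 0)%R ->
  mean_payoff b = mean_payoff a.
Proof.
move=> hB hb; have sb := sum_interleave _ _ hb.
have B0 : (0 <= B)%R by apply: le_trans (hB 0%N).
apply/eqP; rewrite eq_le; apply/andP; split; rewrite !mpE; apply: LIM_LE => e e0 M.
  exists M => n Mn; exists n.*2; split; first by rewrite -addnn (leq_trans Mn) ?leq_addr.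
  rewrite /avg sb doubleK -muln2 natrM invfM -mulrA (mulrA 2^-1%R) mulVf ?mul1r ?pnatr_eq0 //.
  by rewrite lerDl ltW.
have [N HN] := (@small_div B e e0).
exists (maxn N M.*2) => n; rewrite geq_max => /andP[Nn Mn].
exists n./2; split.
  by rewrite -(doubleK M) half_leq.
apply: (le_trans _ (lerD (lexx _) (HN n Nn))).
rewrite /avg sb.
set k := n./2; set S := (\sum_(i < k) a i)%R.
have [k0|kp] := eqVneq k 0%N.
  rewrite /S k0 big_ord0 !mulr0 add0r; apply: divr_ge0 => //.
have n0 : (0 < n)%N.
  rewrite lt0n; apply/eqP => n0; move: kp; rewrite /k n0 //.
have -> : (n%:R^-1 * (2 * S) + B / n%:R = n%:R^-1 * (2 * S + B))%R.
  by rewrite mulrDr (mulrC B).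
apply: div_le; rewrite ?ltr0n ?n0 ?lt0n //.
rewrite -{1}(odd_double_half n) natrD -muln2 natrM mulrDl mulrDr.
rewrite -/k.
have hS : ((odd n)%:R * S <= k%:R * B)%R.
  case: (odd n) => /=; first rewrite mul1r; last by rewrite mul0r mulr_ge0.
  by apply: le_trans (ler_norm _) _; rewrite /S sum_ord_bnd.
nra.
Qed.

End MP.

Section GenPlay.
Variables (T : Type) (nxt : seq T -> T -> T) (x0 : T).
Local Open Scope nat_scope.

Lemma gen_tail_map n : gen_tail nxt x0 n = [seq gen_play nxt x0 k | k <- iota 1 n].
Proof.
elim: n => [//|n IH].
rewrite (_ : iota 1 n.+1 = rcons (iota 1 n) n.+1); last by rewrite -cats1 -(addn1 n) iotaD /= add1n addn1.
rewrite map_rcons /=; congr rcons; first exact: IH.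
by rewrite /gen_play /= last_rcons.
Qed.

Lemma gen_play0 : gen_play nxt x0 0 = x0.
Proof. by []. Qed.

Lemma gen_playS n : gen_play nxt x0 n.+1 =
  nxt (mkseq (gen_play nxt x0) n) (gen_play nxt x0 n).
Proof.
rewrite {1}/gen_play /= last_rcons gen_tail_map.
congr nxt.
  rewrite /mkseq [X in belast X _](_ : x0 = gen_play nxt x0 0) //.
  elim: n 0%N => [//|n IHn] m /=; by rewrite IHn.
case: n => [//|n]; rewrite /gen_play gen_tail_map /=.
by rewrite (last_map (gen_play nxt x0)) /gen_play gen_tail_map.
Qed.

Lemma gen_play_uniq (f : nat -> T) : f 0 = x0 ->
  (forall n, f n.+1 = nxt (mkseq f n) (f n)) -> forall n, f n = gen_play nxt x0 n.
Proof.
move=> f0 fS; suff H : forall n k, (k <= n)%N -> f k = gen_play nxt x0 k.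
  by move=> n; apply: (H n).
elim=> [|n IH] k; first by rewrite leqn0 => /eqP ->.
rewrite leq_eqVlt => /orP[/eqP ->|]; last by apply: IH.
rewrite fS gen_playS IH //; congr nxt.
by rewrite /mkseq; apply/eq_in_map => j; rewrite mem_iota add0n => /andP[_ jn]; apply: IH; rewrite ltnW.
Qed.

End GenPlay.

Section Play.
Variables (R : realType) (V Pi : finType) (owner : V -> Pi) (E : rel V)
  (pi : V -> V -> Pi -> rat) (i : Pi) (lam : V -> \bar R).

Definition cv (s : cstate V) : V := match s with PS v _ => v | CS u _ _ => u end.
Definition cw (s : cstate V) : V := match s with PS v _ => v | CS _ v _ => v end.
Definition cm (s : cstate V) : {set V} := match s with PS _ M => M | CS _ _ M => M end.
Definition isPS (s : cstate V) : bool := match s with PS _ _ => true | CS _ _ _ => false end.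

Lemma cplayS_PS (tP tC : cstrat V) (s : cstate V) n (v : V) (M : {set V}) : cplay tP tC s n = PS v M ->
  cplay tP tC s n.+1 = tP (mkseq (cplay tP tC s) n) (PS v M).
Proof. by move=> e; rewrite /cplay gen_playS -/(cplay tP tC s n) e. Qed.

Lemma cplayS_CS (tP tC : cstrat V) (s : cstate V) n (u v : V) (M : {set V}) : cplay tP tC s n = CS u v M ->
  cplay tP tC s n.+1 = tC (mkseq (cplay tP tC s) n) (CS u v M).
Proof. by move=> e; rewrite /cplay gen_playS -/(cplay tP tC s n) e. Qed.

Arguments cplayS_PS {tP tC s n v M}.
Arguments cplayS_CS {tP tC s n u v M}.

Definition Bnd (j : Pi) : R := (\sum_(x : V) \sum_(y : V) `|ratr (pi x y j) : R|)%R.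

Lemma Bnd_ge j x y : (`|ratr (pi x y j) : R| <= Bnd j)%R.
Proof.
rewrite /Bnd (bigD1 x) //= (bigD1 y) //= -addrA lerDl.
by rewrite addr_ge0 // sumr_ge0 // => z _; rewrite sumr_ge0.
Qed.

Section Eta.
Variables (tP tC : cstrat V) (hP : valid_prover owner E i tP)
  (hC : valid_challenger owner E i tC) (v0 : V).

Definition eta := cplay tP tC (PS v0 [set v0]%SET).

Lemma eta_trans n : ctrans owner E i (eta n) (eta n.+1).
Proof.
case e: (eta n) => [v M|u v M].
  by rewrite /eta (cplayS_PS e); apply: hP.
by rewrite /eta (cplayS_CS e); apply: hC.
Qed.

Lemma eta_evenP n : exists v M, eta n.*2 = PS v M.
Proof.
elim: n => [|n [v [M e]]]; first by exists v0, [set v0]%SET.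
have := eta_trans n.*2; rewrite e.
case e1 : (eta n.*2.+1) => [//|u w N] _.
have := eta_trans n.*2.+1; rewrite e1 doubleS.
by case: (eta n.*2.+2) => [w' N'|] //; exists w', N'.
Qed.

Definition rho n := cv (eta n.*2).
Definition Mem n := cm (eta n.*2).
Definition prop n := cw (eta n.*2.+1).

Lemma eta_even n : eta n.*2 = PS (rho n) (Mem n).
Proof. by have [v [M e]] := eta_evenP n; rewrite /rho /Mem e. Qed.

Lemma eta_odd n : eta n.*2.+1 = CS (rho n) (prop n) (Mem n) /\ E (rho n) (prop n).
Proof.
have := eta_trans n.*2; rewrite eta_even /prop.
by case: (eta n.*2.+1) => //= u w N [-> [-> h]].
Qed.

Lemma eta_odd_tP n : eta n.*2.+1 = tP (mkseq eta n.*2) (eta n.*2).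
Proof. by rewrite /eta (cplayS_PS (eta_even n)) -/eta eta_even. Qed.

Lemma eta_even_tC n : eta n.+1.*2 = tC (mkseq eta n.*2.+1) (eta n.*2.+1).
Proof. by rewrite doubleS /eta (cplayS_CS (eta_odd n).1) -/eta (eta_odd n).1. Qed.

Lemma eta_step n : (rho n.+1 = prop n /\ Mem n.+1 = Mem n :|: [set prop n]%SET) \/
  (owner (rho n) = i /\ E (rho n) (rho n.+1) /\ rho n.+1 != prop n /\
   Mem n.+1 = [set rho n.+1]%SET).
Proof.
have := eta_trans n.*2.+1; rewrite (eta_odd n).1 -doubleS eta_even /=.
by case => [[-> ->]|[h1 [h2 [h3 ->]]]]; [left|right].
Qed.

Lemma rho0 : rho 0 = v0. Proof. by []. Qed.
Lemma Mem0 : Mem 0 = [set v0]%SET. Proof. by []. Qed.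

Lemma rho_edge n : E (rho n) (rho n.+1).
Proof.
by case: (eta_step n) => [[-> _]|[_ [h _]]] //; apply: (eta_odd n).2.
Qed.

Lemma rho_Mem n : rho n \in Mem n.
Proof.
case: n => [|n]; first by rewrite rho0 Mem0 set11.
case: (eta_step n) => [[-> ->]|[_ [_ [_ ->]]]]; last by rewrite set11.
by rewrite finset.in_setU set11 orbT.
Qed.

Definition aw (d : option Pi) n : R :=
  match d with
  | None => ratr (pi (rho n) (rho n.+1) i)
  | Some j => let m := \big[Order.max/-oo]_(x in Mem n | owner x == j) lam x in
      if m \is a fin_num then (ratr (pi (rho n) (rho n.+1) j) - fine m)%R else 0%R
  end.

Lemma eta_weights d k : hatpi owner pi lam i d (eta k) (eta k.+1) =
  if odd k then (2 * aw d k./2)%R else 0%R.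
Proof.
move: (odd_double_half k); set m := k./2; case: (odd k) => /= <-.
  rewrite add1n (eta_odd m).1 -doubleS eta_even /=.
  by case: d => [j|] //=; case: ifP => _; rewrite ?mulr0.
by rewrite add0n eta_even.
Qed.

Lemma hatmu_None : hatmu owner pi lam i None eta = mu R pi i rho.
Proof.
rewrite /hatmu /mu.
apply: (@mp_interleave _ (fun n => ratr (pi (rho n) (rho n.+1) i)) _ (Bnd i)).
  by move=> k; apply: Bnd_ge.
by move=> k; rewrite eta_weights.
Qed.

Lemma hatmu_le j K (c : R) : (forall n, (K <= n)%N ->
    (aw (Some j) n <= ratr (pi (rho n) (rho n.+1) j) - c)%R) ->
  hatmu owner pi lam i (Some j) eta <= mu R pi j rho - c%:E.
Proof.
move=> H; rewrite /mu -mp_subc.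
rewrite -(@mp_interleave _ _ (fun k => if odd k then
   2 * (ratr (pi (rho k./2) (rho k./2.+1) j) - c) else 0)%R (Bnd j + `|c|)%R).
- rewrite /hatmu; apply: (@mp_le_ev _ _ _ K.*2) => k Kk.
  rewrite eta_weights; case: (odd k) => //.
  rewrite ler_pM2l // H // -(doubleK K) half_leq //.
- by move=> k; apply: le_trans (ler_normB _ _) _; rewrite lerD2r Bnd_ge.
- by [].
Qed.

Lemma hatmu_ge j K (c : R) : (forall n, (K <= n)%N ->
    (ratr (pi (rho n) (rho n.+1) j) - c <= aw (Some j) n)%R) ->
  mu R pi j rho - c%:E <= hatmu owner pi lam i (Some j) eta.
Proof.
move=> H; rewrite /mu -mp_subc.
rewrite -(@mp_interleave _ _ (fun k => if odd k then
   2 * (ratr (pi (rho k./2) (rho k./2.+1) j) - c) else 0)%R (Bnd j + `|c|)%R).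
- rewrite /hatmu; apply: (@mp_le_ev _ _ _ K.*2) => k Kk.
  rewrite eta_weights; case: (odd k) => //.
  rewrite ler_pM2l // H // -(doubleK K) half_leq //.
- by move=> k; apply: le_trans (ler_normB _ _) _; rewrite lerD2r Bnd_ge.
- by [].
Qed.

Lemma hatmu_zero j K : (forall n, (K <= n)%N -> aw (Some j) n = 0%R) ->
  hatmu owner pi lam i (Some j) eta = 0.
Proof.
move=> H; rewrite /hatmu (_ : 0 = (0%R)%:E) // -(mp_const _ 0%R); apply: (@mp_eq_ev _ _ _ K.*2) => k Kk.
rewrite eta_weights; case: (odd k) => //.
by rewrite H ?mulr0 // -(doubleK K) half_leq.
Qed.

Lemma eta_nodev_even n : ~ is_deviation (eta n.*2) (eta n.*2.+1).
Proof. by rewrite eta_even. Qed.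

Lemma eta_dev_odd n : is_deviation (eta n.*2.+1) (eta n.+1.*2) <-> rho n.+1 != prop n.
Proof. by rewrite (eta_odd n).1 eta_even. Qed.

Lemma mkseq_eta_S n : mkseq eta n.+1.*2 = mkseq eta n.*2 ++ [:: eta n.*2; eta n.*2.+1].
Proof. by rewrite doubleS !mkseqS -!cats1 -catA. Qed.

Lemma projP_eta n : [seq cv s | s <- mkseq eta n.*2 & isPS s] = mkseq rho n.
Proof.
elim: n => [//|n IH].
rewrite mkseq_eta_S filter_cat map_cat IH mkseqS -cats1; congr cat.
by rewrite /= eta_even (eta_odd n).1.
Qed.

End Eta.
End Play.

Arguments cv {V}. Arguments cw {V}. Arguments cm {V}. Arguments isPS {V}.
Arguments eta {V}. Arguments rho {V}. Arguments Mem {V}. Arguments prop {V}.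
Arguments aw {R V Pi}.
Arguments eta_trans {V Pi owner E i tP tC} hP hC v0 n.
Arguments eta_evenP {V Pi owner E i tP tC} hP hC v0 n.
Arguments eta_even {V Pi owner E i tP tC} hP hC v0 n.
Arguments eta_odd {V Pi owner E i tP tC} hP hC v0 n.
Arguments eta_odd_tP {V Pi owner E i tP tC} hP hC v0 n.
Arguments eta_even_tC {V Pi owner E i tP tC} hP hC v0 n.
Arguments eta_step {V Pi owner E i tP tC} hP hC v0 n.
Arguments rho_edge {V Pi owner E i tP tC} hP hC v0 n.
Arguments rho_Mem {V Pi owner E i tP tC} hP hC v0 n.
Arguments eta_nodev_even {V Pi owner E i tP tC} hP hC v0 n _.
Arguments eta_dev_odd {V Pi owner E i tP tC} hP hC v0 n.
Arguments projP_eta {V Pi owner E i tP tC} hP hC v0 n.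
Arguments eta_weights {R V Pi owner E pi i} lam {tP tC} hP hC v0 d k.
Arguments hatmu_None {R V Pi owner E pi i} lam {tP tC} hP hC v0.
Arguments hatmu_le {R V Pi owner E pi i} lam {tP tC} hP hC v0 j K c _.
Arguments hatmu_ge {R V Pi owner E pi i} lam {tP tC} hP hC v0 j K c _.
Arguments hatmu_zero {R V Pi owner E pi i} lam {tP tC} hP hC v0 j K _.
Arguments rho0 {V} tP tC v0.
Arguments Mem0 {V} tP tC v0.

Lemma mu_suffix (R : realType) (V Pi : finType) (pi : V -> V -> Pi -> rat) j
   (r : nat -> V) n : mu R pi j (Defs.suffix r n) = mu R pi j r.
Proof.
rewrite /mu -(@mp_shift _ (fun k => ratr (pi (r k) (r k.+1) j)) (@Bnd R _ _ pi j) n);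
  last by move=> k; apply: Bnd_ge.
by apply: congr1; apply/funext => k; rewrite /Defs.suffix addnS.
Qed.

Lemma bigmax_Ny (R : realType) (V : finType) (P : pred V) (f : V -> \bar R) :
  (forall x, f x = -oo) -> \big[Order.max/-oo]_(x | P x) f x = -oo.
Proof.
move=> h; apply: (big_ind (fun y => y = -oo)) => //.
  by move=> a b -> ->; rewrite maxxx.
Qed.

Lemma bigmax_fin (R : realType) (V : finType) (P : pred V) (f : V -> \bar R) :
  (forall x, f x \is a fin_num) ->
  \big[Order.max/-oo]_(x | P x) f x = -oo \/ \big[Order.max/-oo]_(x | P x) f x \is a fin_num.
Proof.
move=> h; apply: (big_ind (fun y => y = -oo \/ y \is a fin_num)) => //; [by left| |by right].
move=> a b ha hb; rewrite /Order.max; case: ifP => _; by [].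
Qed.

Lemma take_mkseq (T : Type) (f : nat -> T) k n : take k (mkseq f n) = mkseq f (minn k n).
Proof. by rewrite /mkseq -map_take take_iota. Qed.

Lemma mkseq_add (T : Type) (f : nat -> T) m n :
  mkseq f (m + n) = mkseq f m ++ mkseq (fun k => f (m + k)%N) n.
Proof.
rewrite /mkseq iotaD map_cat add0n; congr cat.
by rewrite -{1}(addn0 m) iotaDl -map_comp.
Qed.

Lemma nth_rcons_mkseq (T : Type) (f : nat -> T) m k d : (k <= m)%N ->
  nth d (rcons (mkseq f m) (f m)) k = f k.
Proof. by move=> km; rewrite -mkseqS nth_mkseq. Qed.

Section Dir2.
Variables (R : realType) (V Pi : finType) (owner : V -> Pi) (E : rel V)
  (hE : forall v, exists w, E v w) (pi : V -> V -> Pi -> rat)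
  (i : Pi) (lam : V -> \bar R) (v0 : V)
  (hlam : (forall v, lam v \is a fin_num) \/ (forall v, lam v = -oo))
  (sg : profile V Pi) (si : strat V)
  (hsg : valid_profile_mi owner E i sg) (hsi : valid_strat owner E i si)
  (hrat : forall h w, history_from E v0 h w -> compatible_mi owner i sg h w ->
     lam_consistent owner pi lam (outcome owner (shift_profile (combine i sg si) h) w)).

Definition sig2 := combine i sg si.

Lemma sig2_valid j : valid_strat owner E j (sig2 j).
Proof.
rewrite /sig2 /combine; case: eqP => [->//|/eqP ji].
exact: hsg.
Qed.

Definition tP2 : cstrat V := fun p s =>
  match s with
  | PS v M => CS v (sig2 (owner v) [seq cv x | x <- p & isPS x] v) M
  | CS _ _ _ => s
  end.

Lemma tP2_valid : valid_prover owner E i tP2.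
Proof. by move=> p v M /=; split=> //; split=> //; apply: sig2_valid. Qed.

Section TC.
Variables (tC : cstrat V) (hC : valid_challenger owner E i tC).
Let hP := tP2_valid.
Local Notation rh := (rho tP2 tC v0).
Local Notation Me := (Mem tP2 tC v0).
Local Notation pr := (prop tP2 tC v0).
Local Notation et := (eta tP2 tC v0).

Lemma prop2 n : pr n = sig2 (owner (rh n)) (mkseq rh n) (rh n).
Proof.
rewrite /prop (eta_odd_tP hP hC v0 n) (eta_even hP hC v0 n) /=.
by rewrite (projP_eta hP hC v0 n).
Qed.

Lemma step_noni n : owner (rh n) != i -> rh n.+1 = sg (owner (rh n)) (mkseq rh n) (rh n).
Proof.
case: (eta_step hP hC v0 n) => [[-> _]|[h _]]; last by rewrite h eqxx.
by rewrite prop2 /sig2 /combine => /negbTE ->.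
Qed.

Definition si2 : strat V := fun p x =>
  if rcons p x == mkseq rh (size p).+1 then rh (size p).+1
  else odflt x [pick y | E x y].

Lemma si2_valid : valid_strat owner E i si2.
Proof.
move=> p x _; rewrite /si2; case: eqP => [e|_].
  have -> : x = rh (size p).
    by move: e; rewrite mkseqS => /eqP; rewrite eqseq_rcons => /andP[_ /eqP].
  exact: (rho_edge hP hC v0).
case: pickP => [y //|none]; have [y Ey] := hE x.
by have := none y; rewrite Ey.
Qed.

Lemma outcome2 : outcome owner (combine i sg si2) v0 = rh.
Proof.
apply/funext => n; symmetry; apply: (@gen_play_uniq _ _ _ (rh)) => {n} // n.
rewrite /combine; case: eqP => [oi|/eqP oi].
  by rewrite /si2 size_mkseq -mkseqS eqxx.
exact: step_noni.
Qed.

Lemma nuC2 : nuC owner pi lam i et <= mu R pi i rh.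
Proof.
rewrite /nuC; case: asboolP => [[[N HN] [j Hj]]|_]; last by rewrite (hatmu_None lam hP hC v0).
exfalso.
pose P k := (k <= N)%N && ((k == 0%N) || (rh k != pr k.-1)).
have exP : exists k, P k by exists 0%N; rewrite /P leq0n eqxx.
have ubP : forall k, P k -> (k <= N)%N by move=> k /andP[].
case: (ex_maxnP exP ubP) => m Pm maxm.
have acc : forall n, (m <= n)%N -> rh n.+1 = pr n.
  move=> n mn; apply/eqP; apply/negPn/negP => dev.
  case: (leqP n.+1 N) => hn.
    have : P n.+1 by rewrite /P hn /=.
    by move/maxm; rewrite ltnNge mn.
  apply: (HN n.*2.+1).
    apply: (leq_trans _ (leqnSn _)); rewrite -addnn; apply: (leq_trans _ (leq_addr n n)); by rewrite -ltnS.
  by rewrite -doubleS; apply/(eta_dev_odd hP hC v0).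
have Mm : Me m = [set rh m]%SET.
  have [m0|mp] := eqVneq m 0%N; first by rewrite m0 Mem0 rho0.
  move: Pm mp; rewrite /P => /andP[_]; case: (m) => [//|m'] /= dev _.
  case: (eta_step hP hC v0 m') => [[e _]|[_ [_ [_ ->]]]] //.
  by rewrite e eqxx in dev.
have Mgrow : forall n, (m <= n)%N -> Me n.+1 = (Me n :|: [set rh n.+1])%SET.
  move=> n mn; case: (eta_step hP hC v0 n) => [[e ->]|[_ [_ [h _]]]]; first by rewrite e.
  by rewrite acc // eqxx in h.
have Msub : forall n x, (m <= n)%N -> x \in Me n -> exists k, (m <= k <= n)%N /\ x = rh k.
  move=> n x mn; rewrite -(subnKC mn); elim: (n - m)%N x => [|d IH] x.
    by rewrite addn0 Mm => /set1P ->; exists m; rewrite leqnn.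
  rewrite addnS Mgrow ?leq_addr // => /setUP[/IH [k [/andP[mk kd] ->]]|/set1P ->].
    by exists k; rewrite mk (leq_trans kd).
  by exists (m + d).+1; rewrite leqnn andbT -addnS leq_addr.
have hist : history_from E v0 (mkseq rh m) (rh m).
  split.
    by case: (m) => [|m'] //=.
  move=> k; rewrite size_mkseq => km.
  rewrite !nth_rcons_mkseq ?(ltnW km) //; exact: (rho_edge hP hC v0).
have comp : compatible_mi owner i sg (mkseq rh m) (rh m).
  move=> k; rewrite size_mkseq => km /=.
  rewrite !nth_rcons_mkseq ?(ltnW km) // => oi.
  by rewrite -mkseqS take_mkseq (minn_idPl (leqW (ltnW km))) step_noni.
have out : outcome owner (shift_profile (combine i sg si) (mkseq rh m)) (rh m) =
    Defs.suffix rh m.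
  apply/funext => n; symmetry; apply: (@gen_play_uniq _ _ _ (Defs.suffix rh m)) => {n}.
    by rewrite /Defs.suffix addn0.
  move=> n; rewrite /Defs.suffix addnS acc ?leq_addr // prop2 /shift_profile.
  by rewrite -mkseq_add.
have cons := hrat _ _ hist comp; rewrite out in cons.
have lam_le : forall k j', (m <= k)%N -> owner (rh k) = j' -> lam (rh k) <= mu R pi j' rh.
  move=> k j' mk ok; have := cons j' (k - m)%N.
  rewrite /Defs.suffix subnKC // => /(_ ok).
  rewrite (_ : (fun k0 => rh (m + (k - m + k0))%N) = Defs.suffix rh k) ?mu_suffix //.
  by apply/funext => k0; rewrite /Defs.suffix addnA subnKC.
have bm_le : forall n, (m <= n)%N ->
    \big[Order.max/-oo]_(x in Me n | owner x == j) lam x <= mu R pi j rh.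
  move=> n mn; apply: bigmax_le; first exact: leNye.
  move=> x /andP[xM /eqP ox].
  have [k [/andP[mk kn] xk]] := Msub n x mn xM; rewrite xk in ox *.
  by have := lam_le k j mk ox.
case: hlam => [hfin|hNy].
  have finmu : mu R pi j rh \is a fin_num.
    by apply: (@mp_bnd _ _ (@Bnd R _ _ pi j)) => k; apply: Bnd_ge.
  case: (pselect (exists n1 x, (m <= n1)%N /\ x \in Me n1 /\ owner x == j)).
    move=> [n1 [x [mn1 [xM ox]]]].
    have xMn : forall n, (n1 <= n)%N -> x \in Me n.
      move=> n n1n; rewrite -(subnKC n1n); elim: (n - n1)%N => [|d IH]; first by rewrite addn0.
      by rewrite addnS Mgrow ?(leq_trans mn1) ?leq_addr // finset.in_setU IH.
    have : mu R pi j rh - (fine (mu R pi j rh))%:E <= hatmu owner pi lam i (Some j) et.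
      apply: (hatmu_ge lam hP hC v0 j n1) => n n1n /=.
      set bm := \big[Order.max/-oo]_(y in Me n | owner y == j) lam y.
      have lxb : lam x <= bm by apply: le_bigmax_cond; rewrite xMn // ox.
      have bfin : bm \is a fin_num.
        case: (@bigmax_fin _ _ (fun y => (y \in Me n) && (owner y == j)) lam hfin) => // bN.
        by move: lxb; rewrite /bm bN leeNy_eq => /eqP lN; move: (hfin x); rewrite lN.
      rewrite bfin lerD2l lerN2 fine_le //.
      by apply: bm_le; rewrite (leq_trans mn1).
    by rewrite fineK // subee // => h; move: (lt_le_trans Hj h); rewrite ltxx.
  move=> hno.
  have : hatmu owner pi lam i (Some j) et = 0.
    apply: (hatmu_zero lam hP hC v0 j m) => n mn /=.
    rewrite big_pred0 //= => x; apply/negP => /andP[xM ox].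
    by apply: hno; exists n, x.
  by move=> h; move: Hj; rewrite h ltxx.
have : hatmu owner pi lam i (Some j) et = 0.
  apply: (hatmu_zero lam hP hC v0 j 0) => n _ /=.
  by rewrite bigmax_Ny.
by move=> h; move: Hj; rewrite h ltxx.
Qed.

End TC.

Lemma dir2 : ereal_sup [set y | exists tC, valid_challenger owner E i tC /\
            y = nuC owner pi lam i (cplay tP2 tC (PS v0 [set v0]%SET))]
  <= ereal_sup [set y | exists si' : strat V, valid_strat owner E i si' /\
            y = mu R pi i (outcome owner (combine i sg si') v0)].
Proof.
apply: ge_ereal_sup => _ [tC [hC ->]].
apply: (le_trans (nuC2 _ hC)).
apply: ereal_sup_ubound; exists (si2 tC); split; first exact: si2_valid.
by rewrite outcome2.
Qed.

End Dir2.

Lemma half_double_S n : (n.*2.+1)./2 = n.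
Proof. by rewrite /= uphalf_half odd_double doubleK. Qed.

Lemma take_nth_mkseq (T : Type) (d : T) (s : seq T) n : (n <= size s)%N ->
  take n s = mkseq (nth d s) n.
Proof.
move=> ns; apply: (@eq_from_nth _ d); first by rewrite size_take size_mkseq; case: ltnP => // sn; apply/eqP; rewrite eqn_leq sn ns.
move=> k; rewrite size_take => kn; have kn2 : (k < n)%N by move: kn; case: (ltnP n (size s)) => [_ //|sn ks]; exact: (leq_trans ks sn).
by rewrite nth_take // nth_mkseq.
Qed.

Lemma mkseq_behead (T : Type) (f : nat -> T) n : behead (mkseq f n.+1) = mkseq (fun k => f k.+1) n.
Proof. by rewrite /mkseq /= -[1%N]/(1 + 0)%N iotaDl -map_comp. Qed.

Lemma eq_mkseq_le (T : Type) (f g : nat -> T) n : (forall k, (k < n)%N -> f k = g k) ->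
  mkseq f n = mkseq g n.
Proof. by move=> h; rewrite /mkseq; apply/eq_in_map => k; rewrite mem_iota => /andP[_]; apply: h. Qed.

Section Dir1.
Variables (R : realType) (V Pi : finType) (owner : V -> Pi) (E : rel V)
  (pi : V -> V -> Pi -> rat)
  (i : Pi) (lam : V -> \bar R) (v0 : V)
  (hlam : (forall v, lam v \is a fin_num) \/ (forall v, lam v = -oo))
  (tP : cstrat V) (hP : valid_prover owner E i tP).

Definition nextP (c : cstate V) (w : V) : cstate V :=
  match c with
  | CS _ v M => if w == v then PS v (M :|: [set v])%SET else PS w [set w]%SET
  | PS _ _ => PS w [set w]%SET
  end.

Definition stepR (acc : seq (cstate V) * cstate V) (w : V) :=
  (acc.1 ++ [:: acc.2; tP acc.1 acc.2], nextP (tP acc.1 acc.2) w).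

Definition reconF (x0 : V) (hs : seq V) := foldl stepR ([::], PS x0 [set x0]%SET) hs.

Definition sigP : profile V Pi := fun j p x =>
  let r := reconF (head x p) (behead (rcons p x)) in cw (tP r.1 r.2).

Lemma reconF_last x0 hs : exists M, (reconF x0 hs).2 = PS (last x0 hs) M.
Proof.
elim/last_ind: hs => [|hs w IH]; first by exists [set x0]%SET.
rewrite /reconF foldl_rcons /= last_rcons.
case: (tP _ _) => [v M|u v M] /=; first by eexists.
by case: eqP => [->|_]; eexists.
Qed.

Lemma head_behead_last (p : seq V) x : last (head x p) (behead (rcons p x)) = x.
Proof. by case: p => [|y p] //=; rewrite last_rcons. Qed.

Lemma sigP_valid j : valid_strat owner E j (sigP j).
Proof.
move=> p x _; rewrite /sigP.
have [M e] := reconF_last (head x p) (behead (rcons p x)).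
rewrite e head_behead_last.
have := hP (reconF (head x p) (behead (rcons p x))).1 x M.
by case: (tP _ _) => //= u w N [_ [_ h]].
Qed.

Section TC1.
Variables (tC : cstrat V) (hC : valid_challenger owner E i tC).
Local Notation rh := (rho tP tC v0).

Lemma reconF_eta n : reconF v0 (mkseq (fun k => rh k.+1) n) =
  (mkseq (eta tP tC v0) n.*2, eta tP tC v0 n.*2).
Proof.
elim: n => [//|n IH].
rewrite mkseqS /reconF foldl_rcons -/(reconF _ _) IH /stepR /=.
rewrite -(eta_odd_tP hP hC v0 n) mkseq_eta_S; congr pair.
rewrite (eta_odd hP hC v0 n).1 (eta_even hP hC v0 n.+1) /=.
case: (eta_step hP hC v0 n) => [[-> ->]|[_ [_ [h ->]]]]; first by rewrite eqxx.
by rewrite (negbTE h).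
Qed.

Lemma sigP_eta j n : sigP j (mkseq rh n) (rh n) = prop tP tC v0 n.
Proof.
rewrite /sigP -mkseqS mkseq_behead.
have -> : head (rh n) (mkseq rh n) = v0 by case: n.
by rewrite reconF_eta /= -(eta_odd_tP hP hC v0 n).
Qed.

End TC1.

Definition tCf (target : nat -> V) : cstrat V := fun p s =>
  match s with
  | CS u v M => let w := target (size p)./2.+1 in
      if w == v then PS v (M :|: [set v])%SET
      else if (owner u == i) && E u w then PS w [set w]%SET
      else PS v (M :|: [set v])%SET
  | PS _ _ => s
  end.

Lemma tCf_valid target : valid_challenger owner E i (tCf target).
Proof.
move=> p u v M /=; case: ifP => [_|ne]; first by left.
case: ifP => [/andP[/eqP oi Euw]|_]; last by left.
by right; rewrite ne.
Qed.

Lemma follow target : target 0%N = v0 ->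
  (forall n, (forall k, (k <= n)%N -> rho tP (tCf target) v0 k = target k) ->
     target n.+1 = prop tP (tCf target) v0 n \/
     (owner (target n) = i /\ E (target n) (target n.+1))) ->
  forall n, rho tP (tCf target) v0 n = target n.
Proof.
move=> t0 hS; have hC := tCf_valid target.
suff H : forall n k, (k <= n)%N -> rho tP (tCf target) v0 k = target k.
  by move=> n; apply: (H n).
elim=> [|n IH] k; first by rewrite leqn0 => /eqP ->.
rewrite leq_eqVlt => /orP[/eqP ->|]; last by apply: IH.
have IHn := IH n (leqnn n).
rewrite /rho (eta_even_tC hP hC v0 n) (eta_odd hP hC v0 n).1 /= size_map size_iota uphalf_half odd_double doubleK add0n.
case: (hS n IH) => [e|[oi Et]].
  by rewrite e eqxx.
case: eqP => [-> //|_].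
by rewrite -/(rho tP (tCf target) v0 n) IHn oi eqxx Et.
Qed.

Lemma dir1 : ereal_inf [set x | exists sg : profile V Pi,
       valid_profile_mi owner E i sg /\ lamRat owner E pi lam i v0 sg /\
     x = ereal_sup [set y | exists si : strat V, valid_strat owner E i si /\
            y = mu R pi i (outcome owner (combine i sg si) v0)]]
  <= ereal_sup [set y | exists tC, valid_challenger owner E i tC /\
            y = nuC owner pi lam i (cplay tP tC (PS v0 [set v0]%SET))].
Proof.
have sig_comb : combine i sigP (sigP i) = sigP.
  by apply/funext => j; rewrite /combine; case: eqP => // ->.
case: (pselect (forall h w, history_from E v0 h w -> compatible_mi owner i sigP h w ->
   lam_consistent owner pi lam (outcome owner (shift_profile sigP h) w))) => [Hc|Hnc].
  apply: (@le_trans _ _ (ereal_sup [set y | exists si, valid_strat owner E i si /\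
            y = mu R pi i (outcome owner (combine i sigP si) v0)])).
    apply: ereal_inf_lbound; exists sigP; split; first by move=> j _; apply: sigP_valid.
    split => //; exists (sigP i); split; first exact: sigP_valid.
    by rewrite sig_comb.
  apply: ge_ereal_sup => _ [si [hsi ->]].
  set tau := outcome owner (combine i sigP si) v0.
  have hC := tCf_valid tau.
  have fol : forall n, rho tP (tCf tau) v0 n = tau n.
    apply: follow => // n hk.
    have e : mkseq (rho tP (tCf tau) v0) n = mkseq tau n.
      by apply: eq_mkseq_le => k kn; apply: hk; rewrite ltnW.
    have tS : tau n.+1 = combine i sigP si (owner (tau n)) (mkseq tau n) (tau n).
      by rewrite /tau /outcome gen_playS.
    case: (eqVneq (owner (tau n)) i) => [oi|oi].
      right; split => //; rewrite tS /combine oi eqxx; exact: hsi.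
    left; rewrite tS /combine (negbTE oi) -e -(hk n (leqnn n)).
    exact: sigP_eta.
  apply: (@le_trans _ _ (nuC owner pi lam i (cplay tP (tCf tau) (PS v0 [set v0]%SET)))).
    have : hatmu owner pi lam i None (eta tP (tCf tau) v0) <=
           nuC owner pi lam i (eta tP (tCf tau) v0).
      by rewrite /nuC; case: asboolP => _; [exact: leey | exact: lexx].
    rewrite (hatmu_None lam hP hC v0) (_ : rho tP (tCf tau) v0 = tau) //.
    by apply/funext => n; rewrite fol.
  by apply: ereal_sup_ubound; exists (tCf tau); split.
have [h [w [hh [hc hnc]]]] : exists h w, history_from E v0 h w /\
    compatible_mi owner i sigP h w /\
    ~ lam_consistent owner pi lam (outcome owner (shift_profile sigP h) w).
  apply: contrapT => hno; apply: Hnc => h w hh hc; apply: contrapT => hnc.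
  by apply: hno; exists h, w.
set K := size h; set L := rcons h w.
set tau := outcome owner (shift_profile sigP h) w.
pose target n := if (n <= K)%N then nth w L n else tau (n - K)%N.
have tgt_lt : forall n, (n <= K)%N -> target n = nth w L n.
  by move=> n nK; rewrite /target nK.
have tgt_ge : forall n, (K <= n)%N -> target n = tau (n - K)%N.
  move=> n Kn; rewrite /target; case: leqP => // nK.
  have -> : n = K by apply/eqP; rewrite eqn_leq nK Kn.
  by rewrite subnn /L nth_rcons ltnn eqxx.
have mk_tgt : forall n, (K <= n)%N -> h ++ mkseq tau (n - K) = mkseq target n.
  move=> n Kn; rewrite -{2}(subnKC Kn) mkseq_add; congr cat.
    rewrite -{1}(mkseq_nth w h); apply: eq_mkseq_le => k kK.
    by rewrite tgt_lt ?(ltnW kK) // /L nth_rcons kK.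
  by apply: eq_mkseq_le => k _; rewrite tgt_ge ?leq_addr // addKn.
have tS_ge : forall n, (K <= n)%N ->
    target n.+1 = sigP (owner (target n)) (mkseq target n) (target n).
  move=> n Kn; rewrite tgt_ge ?(leqW Kn) // (subSn Kn) tgt_ge //.
  by rewrite /tau /outcome gen_playS -/(outcome _ _ _) /shift_profile -/tau mk_tgt.
have hC := tCf_valid target.
have fol : forall n, rho tP (tCf target) v0 n = target n.
  apply: follow.
    rewrite tgt_lt // /L; move: hh => [hd _].
    by case: (h) hd => [|y h'] /=.
  move=> n hk.
  have e : mkseq (rho tP (tCf target) v0) n = mkseq target n.
    by apply: eq_mkseq_le => k kn; apply: hk; rewrite ltnW.
  case: (ltnP n K) => nK.
    rewrite !tgt_lt ?(ltnW nK) //.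
    case: (eqVneq (owner (nth w L n)) i) => [oi|oi].
      by right; split => //; apply: hh.2.
    left; rewrite (hc n nK oi) -/L.
    rewrite (take_nth_mkseq _ w); last by rewrite /L size_rcons -/K (leq_trans (ltnW nK)).
    have -> : mkseq (nth w L) n = mkseq target n.
      by apply: eq_mkseq_le => k kn; rewrite tgt_lt // ltnW // (ltn_trans kn).
    rewrite -tgt_lt ?(ltnW nK) // -e -(hk n (leqnn n)).
    exact: sigP_eta.
  left; rewrite tS_ge // -e -(hk n (leqnn n)).
  exact: sigP_eta.
set rh := rho tP (tCf target) v0.
have acc : forall n, (K <= n)%N -> rh n.+1 = prop tP (tCf target) v0 n.
  move=> n Kn; rewrite /rh !fol tS_ge // -!fol -/rh.
  have -> : mkseq target n = mkseq rh n by apply: eq_mkseq_le => k _; rewrite /rh fol.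
  exact: sigP_eta.
have tau_rh : forall k, tau k = rh (K + k)%N.
  by move=> k; rewrite /rh fol tgt_ge ?leq_addr // addKn.
have nuCoo : nuC owner pi lam i (cplay tP (tCf target) (PS v0 [set v0]%SET)) = +oo.
  rewrite /nuC asboolT //; split.
    exists K.*2 => k Kk.
    rewrite -(odd_double_half k); case: (odd k) => /=; last first.
      by rewrite add0n; apply: (eta_nodev_even hP hC v0).
    rewrite add1n -doubleS => /(eta_dev_odd hP hC v0).
    by rewrite -/rh acc ?eqxx // -(doubleK K) half_leq // (leq_trans Kk) // -{1}(odd_double_half k) leq_addl.
  move: hnc => /existsNP [j /existsNP [n0 /not_implyP [oj hn0]]].
  exists j.
  case: hlam => [hfin|hNy]; last by exfalso; apply: hn0; rewrite hNy leNye.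
  set x := tau n0.
  have xr : x = rh (K + n0)%N by rewrite /x tau_rh.
  have mu_eq : mu R pi j (Defs.suffix tau n0) = mu R pi j rh.
    rewrite (_ : Defs.suffix tau n0 = Defs.suffix rh (K + n0)) ?mu_suffix //.
    by apply/funext => k; rewrite /Defs.suffix tau_rh addnA.
  have lt1 : mu R pi j rh < lam x.
    by rewrite -mu_eq ltNge; apply/negP.
  have xMem : forall n, (K + n0 <= n)%N -> x \in Mem tP (tCf target) v0 n.
    move=> n hn; rewrite -(subnKC hn); elim: (n - (K + n0))%N => [|d IH].
      by rewrite addn0 xr (rho_Mem hP hC v0).
    rewrite addnS; case: (eta_step hP hC v0 (K + n0 + d)) => [[_ ->]|[_ [_ [hd _]]]].
      by rewrite finset.in_setU IH.
    by move: hd; rewrite -/rh acc ?eqxx // -addnA leq_addr.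
  have : hatmu owner pi lam i (Some j) (eta tP (tCf target) v0) <=
         mu R pi j rh - (fine (lam x))%:E.
    apply: (hatmu_le lam hP hC v0 j (K + n0)) => n hn /=.
    set bm := \big[Order.max/-oo]_(y in Mem tP (tCf target) v0 n | owner y == j) lam y.
    have lxb : lam x <= bm by apply: le_bigmax_cond; rewrite xMem // -oj eqxx.
    have bfin : bm \is a fin_num.
      case: (@bigmax_fin _ _ (fun y => (y \in Mem tP (tCf target) v0 n) && (owner y == j)) lam hfin) => // bN.
      by move: lxb; rewrite /bm bN leeNy_eq => /eqP lN; move: (hfin x); rewrite lN.
    by rewrite bfin lerD2l lerN2 fine_le.
  rewrite fineK //; move=> hle; apply: (le_lt_trans hle).
  by rewrite lteBlDr // add0e.
apply: (le_trans (leey _)); rewrite -nuCoo.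
by apply: ereal_sup_ubound; exists (tCf target); split.
Qed.

End Dir1.

Theorem theorem3 (R : realType) (V Pi : finType) (owner : V -> Pi) (E : rel V)
  (hE : forall v, exists w, E v w) (pi : V -> V -> Pi -> rat)
  (i : Pi) (lam : V -> \bar R) (v0 : V)
  (hlam : (forall v, lam v \is a fin_num) \/ (forall v, lam v = -oo)) :
  ereal_inf [set x | exists tP, valid_prover owner E i tP /\
     x = ereal_sup [set y | exists tC, valid_challenger owner E i tC /\
            y = nuC owner pi lam i (cplay tP tC (PS v0 [set v0]))]]
  = ereal_inf [set x | exists sg : profile V Pi,
       valid_profile_mi owner E i sg /\ lamRat owner E pi lam i v0 sg /\
     x = ereal_sup [set y | exists si : strat V, valid_strat owner E i si /\
            y = mu R pi i (outcome owner (combine i sg si) v0)]].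
Proof.
apply/eqP; rewrite eq_le; apply/andP; split.
  apply: le_ereal_inf_tmp => _ [sg [hsg [[si [hsi hrat]] ->]]].
  apply: le_trans; last exact: (@dir2 R V Pi owner E hE pi i lam v0 hlam sg si hsg hsi hrat).
  apply: ereal_inf_lbound; exists (@tP2 V Pi owner i sg si); split => //.
  exact: (@tP2_valid V Pi owner E i sg si hsg hsi).
apply: le_ereal_inf_tmp => _ [tP [hP ->]].
exact: (@dir1 R V Pi owner E pi i lam v0 hlam tP hP).
Qed.
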